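(* Let $\mu$ be a probability measure supported on a symmetric convex domain $\Omega\subset\mathbb R^n$ with $\int_\Omega|x|\,d\mu(x)<+\infty$, and let $h$ be a positive Borel function on $\Omega$ with $b^{-1}\le h\le b$ for some $b>1$ and $\int_\Omega h\,d\mu=1$. Let $d\nu=h\,d\mu$. If $\mu$ satisfies the dilation inequality for $\mathcal K_s^n(\Omega)$ with constant $\kappa>0$, then $\nu$ satisfies the dilation inequality for $\mathcal K_s^n(\Omega)$ with constant $b^{-2}\kappa$.
   Context: Symmetric set: $K=-K$. Symmetric convex domain: nonempty open convex $\Omega=-\Omega\subset\mathbb R^n$. $\mathcal K_s^n(\Omega)$: nonempty symmetric open convex subsets of $\Omega$. For Borel $A\subset\mathbb R^n$, $\varepsilon\in(0,1)$: $A_\varepsilon:=A\cup\{x:\exists y,\ \int_0^1\mathbf 1_A((1-t)x+ty)\,dt>1-\varepsilon\}$; for a probability measure $\mu$, $\mu^*(A):=\liminf_{\varepsilon\downarrow0}(\mu(A_\varepsilon)-\mu(A))/\varepsilon$. $\mu$ satisfies the dilation inequality for $\mathcal K_s^n(\Omega)$ with $\kappa>0$ if $\mu^*(K)\ge-\kappa(1-\mu(K))\log(1-\mu(K))$ for all $K\in\mathcal K_s^n(\Omega)$. *)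

(* Defs.v *)
From HB Require Import structures.
From mathcomp Require Import all_boot all_order all_algebra.
From mathcomp Require Import all_classical all_reals all_analysis.
Set Implicit Arguments. Unset Strict Implicit. Unset Printing Implicit Defensive.
Import Order.TTheory GRing.Theory Num.Theory.
Import numFieldNormedType.Exports.
Local Open Scope classical_set_scope.
Local Open Scope ring_scope.

(* R^n as row vectors, with its Borel sigma-algebra (generated by the open sets
   of the usual (product = Euclidean) topology). *)
Definition Rn (R : realType) (n : nat) : Type :=
  g_sigma_algebraType (@open 'rV[R]_n).

Definition euclid_norm (R : realType) (n : nat) (x : 'rV[R]_n) : R :=
  Num.sqrt (\sum_(i < n) x ord0 i ^+ 2).

Definition symmetric_set (R : realType) (n : nat) (K : set 'rV[R]_n) : Prop :=
  [set - x | x in K] = K.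

Definition convex_set_Rn (R : realType) (n : nat) (K : set 'rV[R]_n) : Prop :=
  forall x y t, K x -> K y -> 0 <= t <= 1 -> K ((1 - t) *: x + t *: y).

Definition sym_convex_domain (R : realType) (n : nat) (Om : set 'rV[R]_n) : Prop :=
  Om !=set0 /\ open Om /\ convex_set_Rn Om /\ symmetric_set Om.

Definition Ksn (R : realType) (n : nat) (Om : set 'rV[R]_n) : set (set 'rV[R]_n) :=
  [set K | K !=set0 /\ symmetric_set K /\ open K /\ convex_set_Rn K /\ K `<=` Om].

Definition dilate (R : realType) (n : nat) (A : set 'rV[R]_n) (eps : R) : set 'rV[R]_n :=
  A `|` [set x | exists y : 'rV[R]_n,
     ((1 - eps)%:E < \int[@lebesgue_measure R]_(t in `[0%R, 1%R])
                        ((\1_A ((1 - t) *: x + t *: y)) : R)%:E)%E].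

Definition dil_deriv (R : realType) (n : nat) (mu : set (Rn R n) -> \bar R)
    (A : set 'rV[R]_n) : \bar R :=
  limf_einf (fun eps : R => ((mu (dilate A eps) - mu A) * (eps^-1)%:E)%E)
            (0%R : R)^'+.

Definition dilation_ineq (R : realType) (n : nat) (mu : set (Rn R n) -> \bar R)
    (Om : set 'rV[R]_n) (kappa : R) : Prop :=
  forall K, Ksn Om K ->
    ((- kappa * (1 - fine (mu K)) * ln (1 - fine (mu K)))%:E <= dil_deriv mu K)%E.

(* Main.v *)
Require Import Defs.
From HB Require Import structures.
From mathcomp Require Import all_boot all_order all_algebra.
From mathcomp Require Import all_classical all_reals all_analysis.
From mathcomp Require Import ring lra measurable_realfun.
Import Order.TTheory GRing.Theory Num.Theory.
Import numFieldNormedType.Exports.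
Local Open Scope classical_set_scope.
Local Open Scope ring_scope.

Section D.
Variable R : realType.

Lemma chord_ln (y l : R) : 1 <= y -> 0 <= l -> l <= 1 -> l * ln y <= ln (l * y + (1 - l)).
Proof.
move=> y1 l0 l1.
have := @concave_ln R (Itv01 l0 l1) y 1 (lt_le_trans ltr01 y1) ltr01.
by rewrite !convRE /= ln1 mulr0 addr0 mulr1.
Qed.

Lemma phi_ge0 (w : R) : 0 <= w -> w <= 1 -> 0 <= - (w * ln w).
Proof. by move=> w0 w1; rewrite oppr_ge0 mulr_ge0_le0 // ln_le0. Qed.

Lemma phi_bound (b v w : R) : 1 < b -> 0 <= v -> v <= 1 -> 0 <= w -> w <= 1 ->
  v <= b * w -> 1 - v <= b * (1 - w) -> - (v * ln v) <= b * - (w * ln w).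
Proof.
move=> b1 v0 v1 w0 w1 vbw vbw'.
have b0 : 0 < b by apply: lt_trans b1.
have [w0'|wpos] := eqVneq w 0.
  have -> : v = 0 by apply/le_anti; rewrite v0 andbT; move: vbw; rewrite w0' mulr0.
  by rewrite w0' !mul0r oppr0 mulr0.
have wp : 0 < w by rewrite lt_def wpos w0.
have lnw : ln w <= 0 by exact: ln_le0.
have [wv|vw] := leP w v.
  have vp : 0 < v by exact: lt_le_trans wp wv.
  have : ln w <= ln v by rewrite ler_ln ?posrE.
  move=> hl.
  nra.
have [v0'|vpos] := eqVneq v 0.
  by rewrite v0' mul0r oppr0 mulr_ge0 ?(ltW b0) ?phi_ge0.
have vp : 0 < v by rewrite lt_def vpos v0.
have [w1'|wlt1] := eqVneq w 1.
  by move: vbw' vw; rewrite w1' subrr mulr0 => *; lra.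
have wl1 : w < 1 by rewrite lt_def eq_sym wlt1 w1.
have vl1 : v < 1 by exact: lt_trans vw wl1.
set y1 := w^-1. set y2 := v^-1.
have y1g : 1 <= y1 by rewrite /y1 invr_ge1 ?(ltW wl1) // unitfE gt_eqF.
have y2g : 1 < y2 by rewrite /y2 invf_gt1.
set l := (y1 - 1) / (y2 - 1).
have l0 : 0 <= l by rewrite /l divr_ge0 // subr_ge0 // ltW.
have l1 : l <= 1.
  rewrite /l ler_pdivrMr ?subr_gt0 // mul1r lerD2r /y1 /y2 ltW // ltf_pV2 ?posrE //.
have := @chord_ln y2 l (ltW y2g) l0 l1.
have -> : l * y2 + (1 - l) = y1.
  rewrite /l; field; rewrite subr_eq0 gt_eqF //.
rewrite /y1 /y2 !lnV ?posrE // => key.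
(* key : l * - ln v <= - ln w *)
have e : v * (1 - w) = l * (w * (1 - v)).
  rewrite /l /y1 /y2; field.
  by rewrite vpos wpos andbT gt_eqF //; lra.
have key2 : v * (1 - w) * - ln v <= w * (1 - v) * - ln w.
  rewrite e.
  have : 0 <= w * (1 - v) by rewrite mulr_ge0 // ?(ltW wp) // subr_ge0 ltW.
  nra.
have e1 : 0 < 1 - w by rewrite subr_gt0.
rewrite -(ler_pM2r e1).
have : 0 <= (b * (1 - w) - (1 - v)) * (w * - ln w).
  by rewrite mulr_ge0 // ?subr_ge0 // mulr_ge0 ?(ltW wp) // oppr_ge0.
nra.
Qed.
End D.

Section C.
Variable R : realType.
Local Open Scope ereal_scope.

Lemma liminf_transfer (f g : R -> \bar R) (F : set_system R) (PF : Filter F)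
   (a L : R) : (0 < a)%R -> L%:E <= limf_einf f F ->
   (\forall x \near F, a%:E * f x <= g x) -> (a * L)%:E <= limf_einf g F.
Proof.
move=> a0 Lf FW; rewrite limf_einfE.
set W := [set x | a%:E * f x <= g x].
have Wfg : forall x, W x -> a%:E * f x <= g x by [].
apply/lee_subgt0Pr => e e0.
rewrite limf_einfE in Lf.
have : (L - e / a)%:E < ereal_sup [set ereal_inf (f @` V) | V in F].
  apply: lt_le_trans Lf; rewrite lte_fin ltrBlDr ltrDl divr_gt0 //.
move=> /ereal_sup_gt [y [V FV Vy] lt]; subst y.
apply: le_ereal_sup_tmp; exists (ereal_inf (g @` (V `&` W))).
  by exists (V `&` W) => //; apply: filterI.
apply: le_ereal_inf_tmp => _ [x [Vx Wx] <-].
apply: le_trans (Wfg x Wx).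
have h1 : (L - e / a)%:E <= f x.
  apply: (le_trans (ltW lt)); apply: ereal_inf_lbound; by exists x.
rewrite -EFinB.
have -> : (a * L - e = a * (L - e / a))%R by field; rewrite gt_eqF.
by rewrite EFinM lee_pmul2l // lte_fin.
Qed.
End C.

Section A.
Variables (R : realType) (n : nat).
Local Notation V := 'rV[R]_n.

Definition seg (x y : V) (t : R) : V := (1 - t) *: x + t *: y.

Lemma segE (x y : V) t : seg x y t = x + t *: (y - x).
Proof. by rewrite /seg scalerBl scale1r scalerBr addrA addrAC. Qed.

Lemma seg_cont_t (x y : V) : continuous (seg x y).
Proof.
move=> t.
have -> : seg x y = (fun t => x + t *: (y - x)) by apply/funext => s; rewrite segE.
have h1 : {for t, continuous (fun=> x)} by exact: cvg_cst.
have h2 : {for t, continuous (fun t : R => t *: (y - x))}.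
  by apply: continuousZr_tmp; exact: cvg_id.
exact: (continuousD h1 h2).
Qed.

Lemma seg_cont_x (y : V) (p : R) : continuous (fun x => seg x y p).
Proof.
move=> x; rewrite /seg.
have h1 : {for x, continuous (fun x : V => (1 - p) *: x)}.
  by apply: (@continuousZl_tmp _ _ _ id); exact: cvg_id.
have h2 : {for x, continuous (fun=> p *: y)} by apply: cst_continuous.
exact: (continuousD h1 h2).
Qed.

Lemma seg_open (K : set V) x y : open K -> open (seg x y @^-1` K).
Proof. by move=> oK; apply: open_comp => // t _; apply: seg_cont_t. Qed.


Lemma indic_seg (K : set V) x y t :
  (\1_K ((1 - t) *: x + t *: y) : R) = \1_(seg x y @^-1` K) t.
Proof. rewrite /indic /seg /preimage /=; congr (_%:R); by apply/idP/idP => /set_mem h; apply: mem_set. Qed.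

Lemma int_seg (K : set V) x y : open K ->
  (\int[@lebesgue_measure R]_(t in `[0%R, 1%R])
      ((\1_K ((1 - t) *: x + t *: y)) : R)%:E =
   @lebesgue_measure R (seg x y @^-1` K `&` `[0%R, 1%R]))%E.
Proof.
move=> oK.
under eq_integral do rewrite indic_seg.
apply: integral_indic; first exact: measurable_itv.
by apply: open_measurable; apply: seg_open.
Qed.

Lemma seg_conv x y p q s :
  (1 - s) *: seg x y p + s *: seg x y q = seg x y ((1 - s) * p + s * q).
Proof.
rewrite !segE !scalerDr !scalerA addrACA -[(1 - s) *: x + s *: x]scalerDl.
by rewrite subrK scale1r !scalerDl addrACA.
Qed.

Lemma A1 (K : set V) x y p q : open K -> convex_set_Rn K ->
  0 <= p -> p < q -> q <= 1 -> K (seg x y p) -> K (seg x y q) ->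
  ((q - p)%:E <= @lebesgue_measure R (seg x y @^-1` K `&` `[0%R, 1%R]))%E.
Proof.
move=> oK cK p0 pq q1 Kp Kq.
have sub : `[p, q] `<=` seg x y @^-1` K `&` `[0%R, 1%R].
  move=> t; rewrite /= in_itv /= => /andP[pt tq]; split; last first.
    by rewrite in_itv /=; apply/andP; split; lra.
  set s := (t - p) / (q - p).
  have s0 : 0 <= s by rewrite /s divr_ge0 // subr_ge0 // ltW.
  have s1 : s <= 1 by rewrite /s ler_pdivrMr ?subr_gt0 // mul1r lerD2r.
  have -> : t = (1 - s) * p + s * q by rewrite /s; field; rewrite subr_eq0 gt_eqF.
  rewrite /preimage /= -seg_conv.
  by apply: cK => //; rewrite s0 s1.
have m1 : measurable (`[p, q] : set R) by exact: measurable_itv.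
have m2 : measurable (seg x y @^-1` K `&` `[0%R, 1%R]).
  apply: measurableI; last exact: measurable_itv.
  by apply: open_measurable; apply: seg_open.
have e : (@lebesgue_measure R (`[p, q] : set R) = (q - p)%:E)%E.
  by rewrite lebesgue_measure_itv /= lte_fin pq -EFinB.
rewrite -e.
exact: (le_measure (@lebesgue_measure R) (mem_set m1) (mem_set m2) sub).
Qed.

Lemma A2 (K : set V) x y (eps : R) : 0 < eps -> eps < 1 -> open K ->
  (forall p q, (seg x y @^-1` K `&` `[0%R, 1%R]) p ->
     (seg x y @^-1` K `&` `[0%R, 1%R]) q -> p < q -> q - p <= 1 - eps) ->
  (@lebesgue_measure R (seg x y @^-1` K `&` `[0%R, 1%R]) <= (1 - eps)%:E)%E.
Proof.
move=> e0 e1 oK H.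
set S := seg x y @^-1` K `&` `[0%R, 1%R].
have mS : measurable S.
  apply: measurableI; last exact: measurable_itv.
  by apply: open_measurable; apply: seg_open.
have [->|ne] := eqVneq S set0; first by rewrite measure0 lee_fin; lra.
have neS : S !=set0 by apply/set0P.
have lbS : lbound S 0 by move=> t [_]; rewrite /= in_itv /= => /andP[].
have hinf : has_inf S by split => //; exists 0.
set a := inf S.
have sub : S `<=` `[a, a + (1 - eps)].
  move=> q Sq; rewrite /= in_itv /=; apply/andP; split.
    exact: ge_inf (proj2 hinf) _ Sq.
  apply/ler_addgt0Pr => d d0.
  have [p Sp pa] := inf_adherent d0 hinf.
  have [pq|qp] := ltP p q.
    have := H p q Sp Sq pq; fold a in pa; lra.
  fold a in pa; lra.
have m1 : measurable (`[a, a + (1 - eps)] : set R) by exact: measurable_itv.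
have e : @lebesgue_measure R (`[a, a + (1 - eps)] : set R) = (1 - eps)%:E.
  rewrite lebesgue_measure_itv /= lte_fin ifT; last lra.
  by rewrite -EFinB; congr (_%:E); ring.
rewrite -e.
exact: (le_measure (@lebesgue_measure R) (mem_set mS) (mem_set m1) sub).
Qed.

Lemma nbhs_seg (K : set V) x y p : open K -> K (seg x y p) ->
  nbhs x [set x' | K (seg x' y p)].
Proof.
move=> oK Kp.
have hK : nbhs (seg x y p) K by move: oK; rewrite openE => /(_ _ Kp).
exact: (seg_cont_x y p x K hK).
Qed.

Lemma dilate_open (K : set V) (eps : R) : open K -> convex_set_Rn K ->
  0 < eps -> eps < 1 -> open (dilate K eps).
Proof.
move=> oK cK e0 e1; rewrite openE => x [Kx|[y hy]].
  have : nbhs x K by move: oK; rewrite openE => /(_ _ Kx).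
  by apply: filterS => z Kz; left.
rewrite int_seg // in hy.
have [[p [q [Sp [Sq [pq qp]]]]]|nex] := pselect (exists p q : R,
    (seg x y @^-1` K `&` `[0%R, 1%R]) p /\
    (seg x y @^-1` K `&` `[0%R, 1%R]) q /\ p < q /\ 1 - eps < q - p); last first.
  have : (@lebesgue_measure R (seg x y @^-1` K `&` `[0%R, 1%R]) <= (1 - eps)%:E)%E.
    apply: A2 => // p q Sp Sq pq; rewrite leNgt; apply/negP => h.
    by apply: nex; exists p, q.
  by rewrite leNgt hy.
case: Sp => Kp; rewrite /= in_itv /= => /andP[p0 _].
case: Sq => Kq; rewrite /= in_itv /= => /andP[_ q1].
have h := filterI (@nbhs_seg K x y p oK Kp) (@nbhs_seg K x y q oK Kq).
suff h2 : [set z | K (seg z y p)] `&` [set z | K (seg z y q)] `<=` dilate K eps.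
  apply: (filterS h2); apply: h; exact: nbhs_filter.
move=> z [Kzp Kzq].
right; exists y; rewrite int_seg //.
apply: (lt_le_trans _ (@A1 K z y p q oK cK p0 pq q1 Kzp Kzq)).
by rewrite lte_fin.
Qed.
End A.

Section B.
Variables (R : realType) (n : nat).
Local Notation T := (Rn R n).
Variable mu : probability T R.
Variables (Om : set T) (h : T -> R) (b : R).
Hypothesis oOm : open (Om : set 'rV[R]_n).
Hypothesis muOm : mu Om = 1%E.
Hypothesis b1 : 1 < b.
Hypothesis mh : measurable_fun Om h.
Hypothesis hb : forall x, Om x -> b^-1 <= h x <= b.

Lemma meas_open (A : set T) : open (A : set 'rV[R]_n) -> measurable A.
Proof. by move=> oA; apply: sub_sigma_algebra. Qed.

Local Open Scope ereal_scope.

Lemma mhE (D : set T) : measurable D -> D `<=` Om -> measurable_fun D (fun x => (h x)%:E).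
Proof.
move=> mD DO; have := measurable_funS (@meas_open Om oOm) DO mh.
by move=> H; apply/measurable_EFinP.
Qed.

Lemma int_bounds (D : set T) : measurable D -> D `<=` Om ->
  (b^-1)%:E * mu D <= \int[mu]_(x in D) (h x)%:E /\
  \int[mu]_(x in D) (h x)%:E <= b%:E * mu D.
Proof.
move=> mD DO; have b0 : (0 < b)%R by apply: lt_trans b1.
split.
  rewrite -(integral_cst mu mD); apply: ge0_le_integral => //.
  - by move=> x _; rewrite lee_fin invr_ge0 ltW.
  - exact: mhE.
  - by move=> x Dx; rewrite lee_fin; case/andP: (hb x (DO x Dx)).
rewrite -(integral_cst mu mD); apply: ge0_le_integral => //.
- by move=> x Dx; rewrite lee_fin; case/andP: (hb x (DO x Dx)) => + _; apply: le_trans; rewrite invr_ge0 ltW.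
- exact: mhE.
- by move=> x Dx; rewrite lee_fin; case/andP: (hb x (DO x Dx)).
Qed.


Lemma int_fin (D : set T) : measurable D -> D `<=` Om ->
  \int[mu]_(x in D) (h x)%:E \is a fin_num.
Proof.
move=> mD DO; have [l u] := @int_bounds D mD DO.
have b0 : (0 < b)%R by apply: lt_trans b1.
rewrite fin_numElt; apply/andP; split.
  apply: (lt_le_trans _ l); apply: (@lt_le_trans _ _ 0); first exact: ltNy0.
  by rewrite mule_ge0 // lee_fin invr_ge0 ltW.
apply: (le_lt_trans u).
by rewrite -(fineK (fin_num_measure mu _ mD)) -EFinM ltry.
Qed.

Definition nu (A : set T) := \int[mu]_(x in A `&` Om) (h x)%:E.

Lemma key (K E : set T) : measurable K -> measurable E -> K `<=` Om -> K `<=` E ->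
  (b^-1)%:E * (mu E - mu K) <= nu E - nu K.
Proof.
move=> mK mE KO KE.
have mOm : measurable Om := @meas_open Om oOm.
have b0 : (0 < b)%R by apply: lt_trans b1.
set D := (E `&` Om) `\` K.
have mD : measurable D by apply: measurableD => //; apply: measurableI.
have DO : D `<=` Om by move=> x [[]].
have eE : E `&` Om = K `|` D.
  apply/seteqP; split => x.
    by move=> [Ex Ox]; have [Kx|nKx] := pselect (K x); [left|right].
  by case=> [Kx|[]//]; split; [apply: KE|apply: KO].
have eK : K `&` Om = K by apply/seteqP; split => x; [case|move=> Kx; split => //; apply: KO].
have hnu : nu E - nu K = \int[mu]_(x in D) (h x)%:E.
  rewrite /nu eE eK ge0_integral_setU //.
  - by rewrite addeAC subee ?add0e // int_fin.
  - by rewrite -eE; apply: mhE; [apply: measurableI|move=> x []].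
  - by move=> x; rewrite -eE => -[_ Ox]; rewrite lee_fin; case/andP: (hb x Ox) => + _; apply: le_trans; rewrite invr_ge0 ltW.
  - by rewrite disj_set2E; apply/eqP/seteqP; split => x // [Kx [_ nKx]].
have hmu : mu E - mu K = mu (E `\` K).
  rewrite (measureDI mu mE mK) setIidr // addeK //.
  exact: fin_num_measure.
rewrite hnu hmu.
apply: (le_trans _ (proj1 (@int_bounds D mD DO))).
apply: lee_wpmul2l; first by rewrite lee_fin invr_ge0 ltW.
have mC : measurable (~` Om) by apply: measurableC.
apply: (le_trans (y := mu (D `|` ~` Om))).
  apply: le_measure; rewrite ?inE.
  - by apply: measurableD.
  - by apply: measurableU.
  by move=> x [Ex nKx]; have [Ox|nOx] := pselect (Om x); [left|right].
apply: (le_trans (measureU2 mu mD mC)).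
have hc : mu (~` Om) = 0 by rewrite (probability_setC mu mOm) muOm subee.
rewrite le_eqVlt; apply/orP; left; apply/eqP; rewrite -[RHS]adde0; congr (_ + _); exact: hc.
Qed.

Lemma props (K : set T) : measurable K -> K `<=` Om ->
  \int[mu]_(x in Om) (h x)%:E = 1 ->
  [/\ (0 <= fine (nu K))%R, (fine (nu K) <= 1)%R, (fine (nu K) <= b * fine (mu K))%R,
      (1 - fine (nu K) <= b * (1 - fine (mu K)))%R &
      (0 <= fine (mu K) <= 1)%R].
Proof.
move=> mK KO hOm.
have mOm : measurable Om := @meas_open Om oOm.
have b0 : (0 < b)%R by apply: lt_trans b1.
have eK : K `&` Om = K by apply/seteqP; split => x; [case|move=> Kx; split => //; apply: KO].
set C := Om `\` K.
have mC : measurable C by apply: measurableD.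
have CO : C `<=` Om by move=> x [].
have eO : Om = K `|` C.
  apply/seteqP; split => x.
    by move=> Ox; have [Kx|nKx] := pselect (K x); [left|right].
  by case=> [Kx|[]//]; apply: KO.
have hsplit : \int[mu]_(x in K) (h x)%:E + \int[mu]_(x in C) (h x)%:E = 1.
  rewrite -hOm [in RHS]eO ge0_integral_setU //.
  - by rewrite -eO; apply: mhE.
  - by move=> x; rewrite -eO => Ox; rewrite lee_fin; case/andP: (hb x Ox) => + _; apply: le_trans; rewrite invr_ge0 ltW.
  - by rewrite disj_set2E; apply/eqP/seteqP; split => x // [Kx [_ nKx]].
have muC : mu C = 1 - mu K.
  rewrite /C measureD // ?setIidr //; first by congr (_ - _); exact: muOm.
  exact: (le_lt_trans (probability_le1 mu mOm) (ltry 1)).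
have [lK uK] := @int_bounds K mK KO.
have [lC uC] := @int_bounds C mC CO.
have fK := @int_fin K mK KO.
have fC := @int_fin C mC CO.
have fmK : mu K \is a fin_num by apply: fin_num_measure.
rewrite /nu eK.
move: lK uK uC lC hsplit; rewrite muC.
rewrite -(fineK fK) -(fineK fC) -(fineK fmK) -EFinB -!EFinM -EFinD.
rewrite !lee_fin => lK uK uC lC [] hs.
have m0 : (0 <= fine (mu K))%R by rewrite -lee_fin fineK // measure_ge0.
have m1 : (fine (mu K) <= 1)%R by rewrite -lee_fin fineK // probability_le1.
have bi0 : (0 <= b^-1)%R by rewrite invr_ge0 ltW.
have h1 : (0 <= b^-1 * fine (mu K))%R by apply: mulr_ge0.
have h2 : (0 <= b^-1 * (1 - fine (mu K)))%R by apply: mulr_ge0; rewrite // subr_ge0.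
split; try lra.
Qed.
End B.

Theorem corollaryc (R : realType) (n : nat)
    (mu : probability (Rn R n) R) (Om : set 'rV[R]_n)
    (h : 'rV[R]_n -> R) (b kappa : R) :
  sym_convex_domain Om ->
  mu (Om : set (Rn R n)) = 1%E ->
  (\int[mu]_x (euclid_norm (x : 'rV[R]_n))%:E < +oo)%E ->
  1 < b ->
  measurable_fun (Om : set (Rn R n)) (h : Rn R n -> R) ->
  (forall x, Om x -> b^-1 <= h x <= b) ->
  (\int[mu]_(x in (Om : set (Rn R n))) (h x)%:E = 1)%E ->
  0 < kappa ->
  dilation_ineq (mu : set (Rn R n) -> \bar R) Om kappa ->
  dilation_ineq (fun A : set (Rn R n) => \int[mu]_(x in A `&` Om) (h x)%:E)%E
                Om (b ^- 2 * kappa).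
Proof.
Proof.
move=> [Omne [oOm [cOm sOm]]] muOm _ b1 mh hb hOm k0 dil K KK.
have [Kne [Ksym [oK [cK KO]]]] := KK.
have hmu := dil K KK.
have mK : measurable (K : set (Rn R n)) := @meas_open R n K oK.
have b0 : 0 < b by apply: lt_trans b1.
have [v0 v1 vb vb' /andP[m0 m1]] :=
  @props R n mu Om h b oOm muOm b1 mh hb K mK KO hOm.
set v := fine (nu R n mu Om h K) in v0 v1 vb vb' *.
set m := fine (mu K) in m0 m1 vb vb' hmu *.
have step := @liminf_transfer R
  (fun eps : R => ((mu (dilate K eps) - mu K) * (eps^-1)%:E)%E)
  (fun eps : R => ((nu R n mu Om h (dilate K eps) - nu R n mu Om h K) * (eps^-1)%:E)%E)
  (0%R : R)^'+ _ (b^-1) (- kappa * (1 - m) * ln (1 - m)) _ hmu.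
have ev : \forall eps \near (0%R : R)^'+,
   ((b^-1)%:E * ((mu (dilate K eps) - mu K) * (eps^-1)%:E) <=
    (nu R n mu Om h (dilate K eps) - nu R n mu Om h K) * (eps^-1)%:E)%E.
  near=> eps.
  have e0 : 0 < eps by near: eps; exact: nbhs_right_gt.
  have e1 : eps < 1 by near: eps; exact: nbhs_right_lt.
  have mKe : measurable (dilate K eps : set (Rn R n)).
    exact: (@meas_open R n _ (@dilate_open R n K eps oK cK e0 e1)).
  have Ke : K `<=` dilate K eps by move=> x Kx; left.
  have hk := @key R n mu Om h b oOm muOm b1 mh hb K (dilate K eps) mK mKe KO Ke.
  rewrite muleA; apply: lee_wpmul2r => //.
  by rewrite lee_fin invr_ge0 ltW.
have bi0 : 0 < b^-1 by rewrite invr_gt0.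
have st := step (@filter_filter R _ (at_right_proper_filter 0)) bi0 ev.
change ((- (b ^- 2 * kappa) * (1 - v) * ln (1 - v))%:E <= dil_deriv (nu R n mu Om h) K)%E.
apply: le_trans st; rewrite lee_fin.
have H : - ((1 - v) * ln (1 - v)) <= b * - ((1 - m) * ln (1 - m)).
  by apply: (@phi_bound R b (1 - v) (1 - m) b1); lra.
have e1 : - (b ^- 2 * kappa) * (1 - v) * ln (1 - v) =
    (b ^- 2 * kappa) * - ((1 - v) * ln (1 - v)) by ring.
have e2 : b^-1 * (- kappa * (1 - m) * ln (1 - m)) =
    (b ^- 2 * kappa) * (b * - ((1 - m) * ln (1 - m))).
  by field; rewrite gt_eqF.
rewrite e1 e2; apply: ler_wpM2l => //.
by rewrite mulr_ge0 ?invr_ge0 ?exprn_ge0 ?ltW.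
Unshelve. all: by end_near.
Qed.
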